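(* For every undirected graph $X$, the category $C_X$ of coverings of $X$ admits all small limits and all small colimits.
   Context: An undirected graph $X$ consists of nodes $X(0)$, half-arcs $X(1)$, maps $s,t:X(1)\to X(0)$ and an involution $\iota$ of $X(1)$ with $s\circ\iota=t$; morphisms are pairs of maps commuting with $s,t,\iota$. An arc is a pair $\{u,\iota(u)\}$, $u\in X(1)$; for a node $x$, $X(x,* )$ is the set of arcs $\{u,\iota(u)\}$ with $s(u)=x$ or $t(u)=x$. A morphism $f:X\to Y$ is a covering if for every node $x$ of $X$ the induced map $f_x:X(x,* )\to Y(f_0(x),* )$ on arcs is bijective (in particular $\emptyset\to X$ is a covering). $C_X$ is the category whose objects are coverings $f:Y\to X$ and whose morphisms from $f:Y\to X$ to $g:Z\to X$ are coverings $h:Y\to Z$ with $g\circ h=f$. *)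

(* Defs.v *)
(* An undirected graph: nodes X(0), half-arcs X(1), source/target maps and an
   involution iota of X(1) with s o iota = t. *)
Record graph : Type := Graph {
  node : Type;
  harc : Type;
  src : harc -> node;
  tgt : harc -> node;
  inv : harc -> harc;
  inv_invol : forall u, inv (inv u) = u;
  src_inv : forall u, src (inv u) = tgt u
}.

Arguments src {g} u.
Arguments tgt {g} u.
Arguments inv {g} u.

Record gmor (X Y : graph) : Type := GMor {
  m0 : node X -> node Y;
  m1 : harc X -> harc Y;
  m_src : forall u, m0 (src u) = src (m1 u);
  m_tgt : forall u, m0 (tgt u) = tgt (m1 u);
  m_inv : forall u, m1 (inv u) = inv (m1 u)
}.

Arguments m0 {X Y} g _.
Arguments m1 {X Y} g _.

(* Two half-arcs determine the same arc {u, iota u}. *)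
Definition same_arc {X : graph} (u v : harc X) : Prop := u = v \/ u = inv v.

Definition at_node {X : graph} (x : node X) (u : harc X) : Prop :=
  src u = x \/ tgt u = x.

(* f is a covering: for every node x, the induced map on arcs
   f_x : X(x,-) -> Y(f0 x,-), {u, iota u} |-> {f1 u, iota (f1 u)},
   is bijective (arcs are represented by half-arcs modulo same_arc). *)
Definition is_covering {X Y : graph} (f : gmor X Y) : Prop :=
  forall x : node X,
    (forall u u' : harc X, at_node x u -> at_node x u' ->
        same_arc (m1 f u) (m1 f u') -> same_arc u u') /\
    (forall v : harc Y, at_node (m0 f x) v ->
        exists u : harc X, at_node x u /\ same_arc (m1 f u) v).

Definition comp_eq {X Y Z : graph} (g : gmor Y Z) (f : gmor X Y) (k : gmor X Z)
  : Prop :=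
  (forall x, m0 g (m0 f x) = m0 k x) /\ (forall u, m1 g (m1 f u) = m1 k u).

Definition gmor_eq {X Y : graph} (f g : gmor X Y) : Prop :=
  (forall x, m0 f x = m0 g x) /\ (forall u, m1 f u = m1 g u).

Record cov_obj (X : graph) : Type := CovObj {
  cov_dom : graph;
  cov_map : gmor cov_dom X;
  cov_is_covering : is_covering cov_map
}.

Arguments cov_dom {X} c.
Arguments cov_map {X} c.

Record cov_hom {X : graph} (A B : cov_obj X) : Type := CovHom {
  ch_map : gmor (cov_dom A) (cov_dom B);
  ch_is_covering : is_covering ch_map;
  ch_comm : comp_eq (cov_map B) ch_map (cov_map A)
}.

Arguments ch_map {X A B} c.

Definition hcomp_eq {X : graph} {A B C : cov_obj X}
  (h2 : cov_hom B C) (h1 : cov_hom A B) (h3 : cov_hom A C) : Prop :=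
  comp_eq (ch_map h2) (ch_map h1) (ch_map h3).

Definition hom_eq {X : graph} {A B : cov_obj X} (h h' : cov_hom A B) : Prop :=
  gmor_eq (ch_map h) (ch_map h').

Definition is_id_hom {X : graph} {A : cov_obj X} (h : cov_hom A A) : Prop :=
  (forall x, m0 (ch_map h) x = x) /\ (forall u, m1 (ch_map h) u = u).

Record smallcat : Type := SmallCat {
  ob : Type;
  hom : ob -> ob -> Type;
  cid : forall a, hom a a;
  ccomp : forall a b c, hom b c -> hom a b -> hom a c;
  ccomp_id_l : forall a b (f : hom a b), ccomp a b b (cid b) f = f;
  ccomp_id_r : forall a b (f : hom a b), ccomp a a b f (cid a) = f;
  ccomp_assoc : forall a b c d (h : hom c d) (g : hom b c) (f : hom a b),
      ccomp a c d h (ccomp a b c g f) = ccomp a b d (ccomp b c d h g) f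
}.

Arguments hom {s} a b.
Arguments cid {s} a.
Arguments ccomp {s a b c} g f.

Record diagram (J : smallcat) (X : graph) : Type := Diagram {
  dob : ob J -> cov_obj X;
  dhom : forall a b, @hom J a b -> cov_hom (dob a) (dob b);
  dhom_id : forall a, is_id_hom (dhom a a (cid a));
  dhom_comp : forall a b c (g : @hom J b c) (f : @hom J a b),
      hcomp_eq (dhom b c g) (dhom a b f) (dhom a c (ccomp g f))
}.

Arguments dob {J X} d a.
Arguments dhom {J X} d {a b} f.

Definition is_cone {J : smallcat} {X : graph} (F : diagram J X) (L : cov_obj X)
  (p : forall j, cov_hom L (dob F j)) : Prop :=
  forall i j (u : @hom J i j), hcomp_eq (dhom F u) (p i) (p j).

Definition is_limit {J : smallcat} {X : graph} (F : diagram J X) (L : cov_obj X)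
  (p : forall j, cov_hom L (dob F j)) : Prop :=
  is_cone F L p /\
  forall (M : cov_obj X) (q : forall j, cov_hom M (dob F j)),
    is_cone F M q ->
    (exists h : cov_hom M L, forall j, hcomp_eq (p j) h (q j)) /\
    (forall h h' : cov_hom M L,
        (forall j, hcomp_eq (p j) h (q j)) ->
        (forall j, hcomp_eq (p j) h' (q j)) -> hom_eq h h').

Definition is_cocone {J : smallcat} {X : graph} (F : diagram J X) (L : cov_obj X)
  (p : forall j, cov_hom (dob F j) L) : Prop :=
  forall i j (u : @hom J i j), hcomp_eq (p j) (dhom F u) (p i).

Definition is_colimit {J : smallcat} {X : graph} (F : diagram J X) (L : cov_obj X)
  (p : forall j, cov_hom (dob F j) L) : Prop :=
  is_cocone F L p /\
  forall (M : cov_obj X) (q : forall j, cov_hom (dob F j) M),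
    is_cocone F M q ->
    (exists h : cov_hom L M, forall j, hcomp_eq h (p j) (q j)) /\
    (forall h h' : cov_hom L M,
        (forall j, hcomp_eq h (p j) (q j)) ->
        (forall j, hcomp_eq h' (p j) (q j)) -> hom_eq h h').

Definition has_all_small_limits (X : graph) : Prop :=
  forall (J : smallcat) (F : diagram J X),
    exists (L : cov_obj X) (p : forall j, cov_hom L (dob F j)), is_limit F L p.

Definition has_all_small_colimits (X : graph) : Prop :=
  forall (J : smallcat) (F : diagram J X),
    exists (L : cov_obj X) (p : forall j, cov_hom (dob F j) L), is_colimit F L p.

(* Main.v *)
Require Import Defs.
From Stdlib Require Import FunctionalExtensionality PropExtensionality ProofIrrelevance IndefiniteDescription Relations List.

Lemma tgt_inv {X : graph} (u : harc X) : tgt (inv u) = src u.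
Proof. rewrite <- src_inv, inv_invol; reflexivity. Qed.

Lemma same_arc_refl {X : graph} (u : harc X) : same_arc u u.
Proof. left; reflexivity. Qed.

Lemma same_arc_sym {X : graph} (u v : harc X) : same_arc u v -> same_arc v u.
Proof. intros [->| ->]; [left; reflexivity| right; rewrite inv_invol; reflexivity]. Qed.

Lemma same_arc_trans {X : graph} (u v w : harc X) :
  same_arc u v -> same_arc v w -> same_arc u w.
Proof.
  unfold same_arc; intros [->| ->] [->| ->]; auto.
  left; rewrite inv_invol; reflexivity.
Qed.

Lemma same_arc_inv_r {X : graph} (u : harc X) : same_arc u (inv u).
Proof. right; rewrite inv_invol; reflexivity. Qed.

Lemma same_arc_invl {X : graph} (u v : harc X) : same_arc (inv u) v -> same_arc u v.
Proof. intro H. apply (same_arc_trans u (inv u) v); [apply same_arc_inv_r| exact H]. Qed.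

Lemma at_node_inv {X : graph} (x : node X) (u : harc X) : at_node x u -> at_node x (inv u).
Proof. unfold at_node; rewrite src_inv, tgt_inv; tauto. Qed.

Lemma at_node_norm {X : graph} (x : node X) (u : harc X) :
  at_node x u -> exists u', src u' = x /\ same_arc u u'.
Proof.
  intros [H|H].
  - exists u; split; [exact H| apply same_arc_refl].
  - exists (inv u); split; [rewrite src_inv; exact H| apply same_arc_inv_r].
Qed.

Lemma m_at {X Y : graph} (f : gmor X Y) x u : at_node x u -> at_node (m0 f x) (m1 f u).
Proof. intros [H|H]; [left|right]; subst; [symmetry; apply m_src| symmetry; apply m_tgt]. Qed.

Lemma m_same {X Y : graph} (f : gmor X Y) u v : same_arc u v -> same_arc (m1 f u) (m1 f v).
Proof. intros [->| ->]; [left; reflexivity| right; apply m_inv]. Qed.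

Definition gid (X : graph) : gmor X X :=
  GMor X X (fun x => x) (fun u => u) (fun _ => eq_refl) (fun _ => eq_refl) (fun _ => eq_refl).

Definition gcomp {X Y Z : graph} (g : gmor Y Z) (f : gmor X Y) : gmor X Z.
Proof.
  refine (GMor X Z (fun x => m0 g (m0 f x)) (fun u => m1 g (m1 f u)) _ _ _);
  intro u; [rewrite m_src, m_src| rewrite m_tgt, m_tgt| rewrite m_inv, m_inv]; reflexivity.
Defined.

Lemma cov_id (X : graph) : is_covering (gid X).
Proof.
  intro x; split.
  - intros u u' _ _ H; exact H.
  - intros v Hv; exists v; split; [exact Hv| apply same_arc_refl].
Qed.

Lemma cov_comp {X Y Z : graph} (g : gmor Y Z) (f : gmor X Y) :
  is_covering g -> is_covering f -> is_covering (gcomp g f).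
Proof.
  intros Hg Hf x; split.
  - intros u u' Hu Hu' H. simpl in H.
    apply (proj1 (Hf x)); auto.
    apply (proj1 (Hg (m0 f x))); auto using m_at.
  - intros v Hv. simpl in Hv.
    destruct (proj2 (Hg (m0 f x)) v Hv) as [w [Hw1 Hw2]].
    destruct (proj2 (Hf x) w Hw1) as [u [Hu1 Hu2]].
    exists u; split; [exact Hu1|]. simpl.
    eapply same_arc_trans; [apply m_same; exact Hu2| exact Hw2].
Qed.

Lemma cov_cancel {X Y Z : graph} (g : gmor Y Z) (f : gmor X Y) (k : gmor X Z) :
  comp_eq g f k -> is_covering k -> is_covering g -> is_covering f.
Proof.
  intros [E0 E1] Hk Hg x; split.
  - intros u u' Hu Hu' H.
    apply (proj1 (Hk x)); auto.
    rewrite <- !E1. apply m_same; exact H.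
  - intros v Hv.
    destruct (proj2 (Hk x) (m1 g v)) as [u [Hu1 Hu2]].
    { rewrite <- E0. apply m_at; exact Hv. }
    exists u; split; [exact Hu1|].
    apply (proj1 (Hg (m0 f x))); auto using m_at.
    rewrite E1; exact Hu2.
Qed.

Definition hid {X : graph} (A : cov_obj X) : cov_hom A A :=
  CovHom X A A (gid (cov_dom A)) (cov_id _) (conj (fun _ => eq_refl) (fun _ => eq_refl)).

Definition hcomp {X : graph} {A B C : cov_obj X} (g : cov_hom B C) (f : cov_hom A B) : cov_hom A C.
Proof.
  refine (CovHom X A C (gcomp (ch_map g) (ch_map f)) (cov_comp _ _ (ch_is_covering _ _ g) (ch_is_covering _ _ f)) _).
  destruct (ch_comm _ _ g) as [g0 g1]; destruct (ch_comm _ _ f) as [f0 f1].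
  split; intro; simpl; [rewrite g0, f0| rewrite g1, f1]; reflexivity.
Defined.

Lemma sig_ext {A : Type} {P : A -> Prop} (a b : sig P) : proj1_sig a = proj1_sig b -> a = b.
Proof. destruct a, b; simpl; intros ->; f_equal; apply proof_irrelevance. Qed.

Notation crst := (clos_refl_sym_trans _).

Definition Qt (A : Type) (R : A -> A -> Prop) : Type :=
  {c : A -> Prop | exists a, c = crst R a}.

Definition qcls {A : Type} (R : A -> A -> Prop) (a : A) : Qt A R :=
  exist _ (crst R a) (ex_intro _ a eq_refl).

Definition qrep {A : Type} {R : A -> A -> Prop} (c : Qt A R) : A :=
  proj1_sig (constructive_indefinite_description _ (proj2_sig c)).

Lemma qrep_spec {A R} (c : Qt A R) : qcls R (qrep c) = c.
Proof.
  unfold qrep. destruct (constructive_indefinite_description _ (proj2_sig c)) as [a Ha].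
  simpl. apply sig_ext; simpl. symmetry; exact Ha.
Qed.

Lemma qcls_eq {A R} (a b : A) : qcls R a = qcls R b <-> crst R a b.
Proof.
  split.
  - intro H. apply (f_equal (@proj1_sig _ _)) in H. simpl in H.
    assert (crst R b b) by apply rst_refl.
    rewrite <- H in H0. exact H0.
  - intro H. apply sig_ext; simpl.
    apply functional_extensionality; intro c; apply propositional_extensionality; split; intro H'.
    + apply rst_trans with a; [apply rst_sym; exact H| exact H'].
    + apply rst_trans with b; [exact H| exact H'].
Qed.

Lemma qrep_rel {A R} (a : A) : crst R (qrep (qcls R a)) a.
Proof. apply (proj1 (qcls_eq _ _)). rewrite qrep_spec. reflexivity. Qed.

Lemma crst_map {A B} (R : A -> A -> Prop) (S : B -> B -> Prop) (f : A -> B) :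
  (forall a b, R a b -> crst S (f a) (f b)) -> forall a b, crst R a b -> crst S (f a) (f b).
Proof.
  intros H a b Hab; induction Hab.
  - apply H; assumption.
  - apply rst_refl.
  - apply rst_sym; assumption.
  - eapply rst_trans; eassumption.
Qed.

Lemma crst_fun {A B} (R : A -> A -> Prop) (f : A -> B) :
  (forall a b, R a b -> f a = f b) -> forall a b, crst R a b -> f a = f b.
Proof.
  intros H a b Hab; induction Hab; [auto| reflexivity| congruence| congruence].
Qed.

Record gdata (X : graph) : Type := GData {
  gI : Type; gG : gI -> cov_obj X; gK : Type; gs : gK -> gI; gt : gK -> gI;
  gphi : forall k, cov_hom (gG (gs k)) (gG (gt k)) }.
Arguments gI {X} _.
Arguments gG {X} _ i.
Arguments gK {X} _.
Arguments gs {X} _ k.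
Arguments gt {X} _ k.
Arguments gphi {X} _ k.

Definition NS {X} (D : gdata X) := {i : gI D & node (cov_dom (gG D i))}.
Definition HS {X} (D : gdata X) := {i : gI D & harc (cov_dom (gG D i))}.

Definition BN {X} (D : gdata X) (z z' : NS D) : Prop :=
  exists k x, z = existT _ (gs D k) x /\ z' = existT _ (gt D k) (m0 (ch_map (gphi D k)) x).
Definition BH {X} (D : gdata X) (z z' : HS D) : Prop :=
  exists k u, z = existT _ (gs D k) u /\ z' = existT _ (gt D k) (m1 (ch_map (gphi D k)) u).

Definition hsrc {X} {D : gdata X} (z : HS D) : NS D := existT _ (projT1 z) (src (projT2 z)).
Definition htgt {X} {D : gdata X} (z : HS D) : NS D := existT _ (projT1 z) (tgt (projT2 z)).
Definition hinv {X} {D : gdata X} (z : HS D) : HS D := existT _ (projT1 z) (inv (projT2 z)).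

Lemma hsrc_resp {X} (D : gdata X) : forall a b, crst (BH D) a b -> crst (BN D) (hsrc a) (hsrc b).
Proof.
  apply crst_map. intros a b (k & u & -> & ->). apply rst_step.
  exists k, (src u). unfold hsrc; simpl. rewrite m_src. split; reflexivity.
Qed.
Lemma htgt_resp {X} (D : gdata X) : forall a b, crst (BH D) a b -> crst (BN D) (htgt a) (htgt b).
Proof.
  apply crst_map. intros a b (k & u & -> & ->). apply rst_step.
  exists k, (tgt u). unfold htgt; simpl. rewrite m_tgt. split; reflexivity.
Qed.
Lemma hinv_resp {X} (D : gdata X) : forall a b, crst (BH D) a b -> crst (BH D) (hinv a) (hinv b).
Proof.
  apply crst_map. intros a b (k & u & -> & ->). apply rst_step.
  exists k, (inv u). unfold hinv; simpl. rewrite m_inv. split; reflexivity.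
Qed.

Definition QN {X} (D : gdata X) := Qt (NS D) (BN D).
Definition QH {X} (D : gdata X) := Qt (HS D) (BH D).

Definition qsrc {X} {D : gdata X} (c : QH D) : QN D := qcls _ (hsrc (qrep c)).
Definition qtgt {X} {D : gdata X} (c : QH D) : QN D := qcls _ (htgt (qrep c)).
Definition qinv {X} {D : gdata X} (c : QH D) : QH D := qcls _ (hinv (qrep c)).

Lemma qsrc_cls {X} {D : gdata X} (z : HS D) : qsrc (qcls _ z) = qcls _ (hsrc z).
Proof. apply qcls_eq, hsrc_resp, qrep_rel. Qed.
Lemma qtgt_cls {X} {D : gdata X} (z : HS D) : qtgt (qcls _ z) = qcls _ (htgt z).
Proof. apply qcls_eq, htgt_resp, qrep_rel. Qed.
Lemma qinv_cls {X} {D : gdata X} (z : HS D) : qinv (qcls _ z) = qcls _ (hinv z).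
Proof. apply qcls_eq, hinv_resp, qrep_rel. Qed.

Lemma qinv_invol {X} {D : gdata X} (c : QH D) : qinv (qinv c) = c.
Proof.
  rewrite <- (qrep_spec c). rewrite !qinv_cls. destruct (qrep c) as [i u].
  unfold hinv; simpl. rewrite inv_invol. reflexivity.
Qed.

Lemma qsrc_inv {X} {D : gdata X} (c : QH D) : qsrc (qinv c) = qtgt c.
Proof.
  rewrite <- (qrep_spec c). rewrite qinv_cls, qsrc_cls, qtgt_cls. destruct (qrep c) as [i u].
  unfold hinv, hsrc, htgt; simpl. rewrite src_inv. reflexivity.
Qed.

Definition Qg {X} (D : gdata X) : graph :=
  Graph (QN D) (QH D) qsrc qtgt qinv qinv_invol qsrc_inv.

Definition pNs {X} {D : gdata X} (z : NS D) : node X := m0 (cov_map (gG D (projT1 z))) (projT2 z).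
Definition pHs {X} {D : gdata X} (z : HS D) : harc X := m1 (cov_map (gG D (projT1 z))) (projT2 z).

Lemma pNs_resp {X} (D : gdata X) : forall a b, crst (BN D) a b -> pNs a = pNs b.
Proof.
  apply crst_fun. intros a b (k & x & -> & ->). unfold pNs; simpl.
  symmetry; apply (proj1 (ch_comm _ _ (gphi D k))).
Qed.
Lemma pHs_resp {X} (D : gdata X) : forall a b, crst (BH D) a b -> pHs a = pHs b.
Proof.
  apply crst_fun. intros a b (k & x & -> & ->). unfold pHs; simpl.
  symmetry; apply (proj2 (ch_comm _ _ (gphi D k))).
Qed.

Definition qpN {X} {D : gdata X} (c : QN D) : node X := pNs (qrep c).
Definition qpH {X} {D : gdata X} (c : QH D) : harc X := pHs (qrep c).
Lemma qpN_cls {X} {D : gdata X} z : @qpN X D (qcls _ z) = pNs z.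
Proof. apply pNs_resp, qrep_rel. Qed.
Lemma qpH_cls {X} {D : gdata X} z : @qpH X D (qcls _ z) = pHs z.
Proof. apply pHs_resp, qrep_rel. Qed.

Definition Qmap {X} (D : gdata X) : gmor (Qg D) X.
Proof.
  refine (GMor (Qg D) X qpN qpH _ _ _); intro c; simpl;
  rewrite <- (qrep_spec c);
  [rewrite qsrc_cls| rewrite qtgt_cls| rewrite qinv_cls];
  rewrite ?qpN_cls, ?qpH_cls; destruct (qrep c) as [i u];
  unfold pNs, pHs, hsrc, htgt, hinv; simpl;
  [apply m_src| apply m_tgt| apply m_inv].
Defined.

Definition transP {X} (D : gdata X) (z z' : NS D) : Prop :=
  forall u : harc (cov_dom (gG D (projT1 z))), at_node (projT2 z) u ->
  exists u' : harc (cov_dom (gG D (projT1 z'))), at_node (projT2 z') u' /\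
     crst (BH D) (existT _ (projT1 z) u) (existT _ (projT1 z') u').

Lemma transport {X} (D : gdata X) z z' : crst (BN D) z z' -> transP D z z' /\ transP D z' z.
Proof.
  intro H; induction H as [a b Hab| a| a b _ [IH1 IH2]| a b c _ [IH1 IH2] _ [IH3 IH4]].
  - destruct Hab as (k & x & -> & ->). split; intros u Hu; simpl in *.
    + exists (m1 (ch_map (gphi D k)) u); split; [apply m_at; exact Hu|].
      apply rst_step. exists k, u; split; reflexivity.
    + destruct (proj2 (ch_is_covering _ _ (gphi D k) x) u Hu) as [u0 [Hu0 Hs]].
      destruct Hs as [Hs|Hs].
      * exists u0; split; [exact Hu0|]. rewrite <- Hs. apply rst_sym, rst_step.
        exists k, u0; split; reflexivity.
      * exists (inv u0); split; [apply at_node_inv; exact Hu0|].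
        assert (u = m1 (ch_map (gphi D k)) (inv u0)) as ->.
        { rewrite m_inv, Hs, inv_invol; reflexivity. }
        apply rst_sym, rst_step. exists k, (inv u0); split; reflexivity.
  - split; intros u Hu; exists u; split; auto; apply rst_refl.
  - split; assumption.
  - split; intros u Hu.
    + destruct (IH1 u Hu) as [u1 [Hu1 R1]]. destruct (IH3 u1 Hu1) as [u2 [Hu2 R2]].
      exists u2; split; [exact Hu2| eapply rst_trans; eassumption].
    + destruct (IH4 u Hu) as [u1 [Hu1 R1]]. destruct (IH2 u1 Hu1) as [u2 [Hu2 R2]].
      exists u2; split; [exact Hu2| eapply rst_trans; eassumption].
Qed.

Lemma at_cls {X} (D : gdata X) (i : gI D) (x : node (cov_dom (gG D i))) (e : QH D) :
  @at_node (Qg D) (@qcls (NS D) (BN D) (existT _ i x)) e ->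
  exists u : harc (cov_dom (gG D i)), at_node x u /\ e = @qcls (HS D) (BH D) (existT _ i u).
Proof.
  rewrite <- (qrep_spec e). destruct (qrep e) as [j u].
  intros [H|H]; simpl in H;
  [rewrite qsrc_cls in H| rewrite qtgt_cls in H];
  apply qcls_eq in H; apply transport in H; destruct H as [H _];
  destruct (H u) as [u' [Hu' R]]; simpl in *; try (left; reflexivity); try (right; reflexivity);
  exists u'; split; auto; apply qcls_eq; exact R.
Qed.

Lemma Q_covering {X} (D : gdata X) : is_covering (Qmap D).
Proof.
  intro c. rewrite <- (qrep_spec c). destruct (qrep c) as [i x]. split.
  - intros e e' He He' Hs.
    destruct (at_cls D i x e He) as [u [Hu ->]].
    destruct (at_cls D i x e' He') as [u' [Hu' ->]].
    simpl in Hs. rewrite !qpH_cls in Hs. unfold pHs in Hs; simpl in Hs.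
    destruct (proj1 (cov_is_covering _ (gG D i) x) u u' Hu Hu' Hs) as [->| ->].
    + left; reflexivity.
    + right. simpl. rewrite qinv_cls. reflexivity.
  - intros v Hv. simpl in Hv. rewrite qpN_cls in Hv. unfold pNs in Hv; simpl in Hv.
    destruct (proj2 (cov_is_covering _ (gG D i) x) v Hv) as [u [Hu Hs]].
    exists (@qcls (HS D) (BH D) (existT _ i u)); split.
    + destruct Hu as [Hu|Hu]; [left|right]; simpl;
      [rewrite qsrc_cls| rewrite qtgt_cls]; unfold hsrc, htgt; simpl; rewrite Hu; reflexivity.
    + simpl. rewrite qpH_cls. exact Hs.
Qed.

Definition Qobj {X} (D : gdata X) : cov_obj X := CovObj X (Qg D) (Qmap D) (Q_covering D).

Definition qincl_g {X} (D : gdata X) (i : gI D) : gmor (cov_dom (gG D i)) (Qg D).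
Proof.
  refine (GMor _ (Qg D) (fun x => @qcls (NS D) (BN D) (existT _ i x)) (fun u => @qcls (HS D) (BH D) (existT _ i u)) _ _ _);
  intro u; simpl; [rewrite qsrc_cls| rewrite qtgt_cls| rewrite qinv_cls]; reflexivity.
Defined.

Lemma qincl_comm {X} (D : gdata X) i : comp_eq (Qmap D) (qincl_g D i) (cov_map (gG D i)).
Proof. split; intro; simpl; [rewrite qpN_cls| rewrite qpH_cls]; reflexivity. Qed.

Definition qincl {X} (D : gdata X) (i : gI D) : cov_hom (gG D i) (Qobj D) :=
  CovHom X _ (Qobj D) (qincl_g D i)
    (cov_cancel _ _ _ (qincl_comm D i) (cov_is_covering _ _) (Q_covering D))
    (qincl_comm D i).

Lemma qincl_glue {X} (D : gdata X) k : hcomp_eq (qincl D (gt D k)) (gphi D k) (qincl D (gs D k)).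
Proof.
  split; intro; simpl; apply qcls_eq, rst_sym, rst_step; eexists k, _; split; reflexivity.
Qed.

Definition psiN {X} {D : gdata X} {M : cov_obj X} (psi : forall i, cov_hom (gG D i) M) (z : NS D) :=
  m0 (ch_map (psi (projT1 z))) (projT2 z).
Definition psiH {X} {D : gdata X} {M : cov_obj X} (psi : forall i, cov_hom (gG D i) M) (z : HS D) :=
  m1 (ch_map (psi (projT1 z))) (projT2 z).

Lemma psiN_resp {X} {D : gdata X} {M : cov_obj X} (psi : forall i, cov_hom (gG D i) M)
  (Hpsi : forall k, hcomp_eq (psi (gt D k)) (gphi D k) (psi (gs D k))) :
  forall a b, crst (BN D) a b -> psiN psi a = psiN psi b.
Proof.
  apply crst_fun. intros a b (k & x & -> & ->). unfold psiN; simpl.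
  symmetry; apply (proj1 (Hpsi k)).
Qed.
Lemma psiH_resp {X} {D : gdata X} {M : cov_obj X} (psi : forall i, cov_hom (gG D i) M)
  (Hpsi : forall k, hcomp_eq (psi (gt D k)) (gphi D k) (psi (gs D k))) :
  forall a b, crst (BH D) a b -> psiH psi a = psiH psi b.
Proof.
  apply crst_fun. intros a b (k & x & -> & ->). unfold psiH; simpl.
  symmetry; apply (proj2 (Hpsi k)).
Qed.

Lemma psiN_cls {X} {D : gdata X} {M : cov_obj X} (psi : forall i, cov_hom (gG D i) M)
  (Hpsi : forall k, hcomp_eq (psi (gt D k)) (gphi D k) (psi (gs D k))) z :
  psiN psi (qrep (@qcls (NS D) (BN D) z)) = psiN psi z.
Proof. apply (psiN_resp psi Hpsi), qrep_rel. Qed.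
Lemma psiH_cls {X} {D : gdata X} {M : cov_obj X} (psi : forall i, cov_hom (gG D i) M)
  (Hpsi : forall k, hcomp_eq (psi (gt D k)) (gphi D k) (psi (gs D k))) z :
  psiH psi (qrep (@qcls (HS D) (BH D) z)) = psiH psi z.
Proof. apply (psiH_resp psi Hpsi), qrep_rel. Qed.

Definition qind_g {X} (D : gdata X) (M : cov_obj X) (psi : forall i, cov_hom (gG D i) M)
  (Hpsi : forall k, hcomp_eq (psi (gt D k)) (gphi D k) (psi (gs D k))) : gmor (Qg D) (cov_dom M).
Proof.
  refine (GMor (Qg D) (cov_dom M) (fun c => psiN psi (qrep c)) (fun c => psiH psi (qrep c)) _ _ _);
  intro c; simpl; unfold qsrc, qtgt, qinv;
  rewrite ?(psiN_cls psi Hpsi), ?(psiH_cls psi Hpsi);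
  destruct (qrep c) as [i u]; unfold psiN, psiH, hsrc, htgt, hinv; simpl;
  [apply m_src| apply m_tgt| apply m_inv].
Defined.

Lemma qind_comm {X} (D : gdata X) (M : cov_obj X) psi Hpsi :
  comp_eq (cov_map M) (qind_g D M psi Hpsi) (Qmap D).
Proof.
  split; intro c; simpl; unfold qpN, qpH, psiN, psiH, pNs, pHs; destruct (qrep c) as [i u]; simpl;
  [apply (proj1 (ch_comm _ _ (psi i)))| apply (proj2 (ch_comm _ _ (psi i)))].
Qed.

Definition qind {X} (D : gdata X) (M : cov_obj X) psi Hpsi : cov_hom (Qobj D) M :=
  CovHom X (Qobj D) M (qind_g D M psi Hpsi)
    (cov_cancel _ _ _ (qind_comm D M psi Hpsi) (Q_covering D) (cov_is_covering _ _))
    (qind_comm D M psi Hpsi).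

Lemma qind_fac {X} (D : gdata X) (M : cov_obj X) psi Hpsi i :
  hcomp_eq (qind D M psi Hpsi) (qincl D i) (psi i).
Proof.
  split; intro; simpl; [rewrite (psiN_cls psi Hpsi)| rewrite (psiH_cls psi Hpsi)]; reflexivity.
Qed.

Lemma qind_uniq {X} (D : gdata X) (M : cov_obj X) (psi : forall i, cov_hom (gG D i) M)
  (h h' : cov_hom (Qobj D) M) :
  (forall i, hcomp_eq h (qincl D i) (psi i)) -> (forall i, hcomp_eq h' (qincl D i) (psi i)) ->
  hom_eq h h'.
Proof.
  intros H H'. split; intro c; rewrite <- (qrep_spec c); destruct (qrep c) as [i x].
  - transitivity (m0 (ch_map (psi i)) x); [|symmetry]; [apply (proj1 (H i))| apply (proj1 (H' i))].
  - transitivity (m1 (ch_map (psi i)) x); [|symmetry]; [apply (proj2 (H i))| apply (proj2 (H' i))].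
Qed.

Definition colimD {J : smallcat} {X : graph} (F : diagram J X) : gdata X :=
  GData X (ob J) (dob F) {a : ob J & {b : ob J & @hom J a b}}
    (fun k => projT1 k) (fun k => projT1 (projT2 k)) (fun k => dhom F (projT2 (projT2 k))).

Theorem colimits (X : graph) : has_all_small_colimits X.
Proof.
  intros J F. exists (Qobj (colimD F)), (qincl (colimD F)). split.
  - intros i j u. apply (qincl_glue (colimD F) (existT _ i (existT _ j u))).
  - intros M q Hq.
    assert (Hpsi : forall k, hcomp_eq (q (gt (colimD F) k)) (gphi (colimD F) k) (q (gs (colimD F) k))).
    { intros [a [b f]]. apply Hq. }
    split.
    + exists (qind (colimD F) M q Hpsi). intro j. exact (qind_fac (colimD F) M q Hpsi j).
    + intros h h' H H'. apply (qind_uniq (colimD F) M q h h' H H').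
Qed.

Definition poG {X} (M N1 N2 : cov_obj X) (i : option bool) : cov_obj X :=
  match i with None => M | Some true => N1 | Some false => N2 end.

Definition poD {X} {M N1 N2 : cov_obj X} (g1 : cov_hom M N1) (g2 : cov_hom M N2) : gdata X :=
  GData X (option bool) (poG M N1 N2) bool (fun _ => None) (fun b => Some b)
   (fun b => match b return cov_hom (poG M N1 N2 None) (poG M N1 N2 (Some b)) with
             | true => g1 | false => g2 end).

Lemma pushout_basic {X} {M N1 N2 : cov_obj X} (g1 : cov_hom M N1) (g2 : cov_hom M N2) m :
  m0 (ch_map (qincl (poD g1 g2) (Some true))) (m0 (ch_map g1) m) =
  m0 (ch_map (qincl (poD g1 g2) (Some false))) (m0 (ch_map g2) m).
Proof.
  simpl. apply qcls_eq. apply rst_trans with (existT _ None m).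
  - apply rst_sym, rst_step. exists true, m; split; reflexivity.
  - apply rst_step. exists false, m; split; reflexivity.
Qed.

Definition Lab {J X} (F : diagram J X) := (harc X * forall j : ob J, harc (cov_dom (dob F j)))%type.
Definition PN {J X} (F : diagram J X) := (node X * forall j : ob J, node (cov_dom (dob F j)))%type.

Definition lab {J X} (F : diagram J X) (M : cov_obj X) (q : forall j, cov_hom M (dob F j))
  (w : harc (cov_dom M)) : Lab F := (m1 (cov_map M) w, fun j => m1 (ch_map (q j)) w).
Definition pnd {J X} (F : diagram J X) (M : cov_obj X) (q : forall j, cov_hom M (dob F j))
  (m : node (cov_dom M)) : PN F := (m0 (cov_map M) m, fun j => m0 (ch_map (q j)) m).

Fixpoint trace {J X} (F : diagram J X) (M : cov_obj X) (q : forall j, cov_hom M (dob F j))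
  (m : node (cov_dom M)) (ws : list (Lab F)) : Prop :=
  match ws with
  | nil => True
  | l :: ws' => exists w, src w = m /\ lab F M q w = l /\ trace F M q (tgt w) ws'
  end.

Definition cmap {J X} (F : diagram J X) (M : cov_obj X) (q : forall j, cov_hom M (dob F j))
  (N : cov_obj X) (qN : forall j, cov_hom N (dob F j)) (g : cov_hom M N) : Prop :=
  forall j, hcomp_eq (qN j) g (q j).

Definition What {J X} (F : diagram J X) (M : cov_obj X) (q : forall j, cov_hom M (dob F j))
  (m : node (cov_dom M)) (ws : list (Lab F)) : Prop :=
  exists (N : cov_obj X) (qN : forall j, cov_hom N (dob F j)) (g : cov_hom M N),
    cmap F M q N qN g /\ trace F N qN (m0 (ch_map g) m) ws.

Definition tgtP {J X} (F : diagram J X) (l : Lab F) : PN F := (tgt (fst l), fun j => tgt (snd l j)).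
Definition invL {J X} (F : diagram J X) (l : Lab F) : Lab F := (inv (fst l), fun j => inv (snd l j)).
Definition deriv {J X} (F : diagram J X) (l : Lab F) (W : list (Lab F) -> Prop) : list (Lab F) -> Prop :=
  fun ws => W (l :: ws).

Lemma lab_cmap {J X} (F : diagram J X) M q N qN g w :
  cmap F M q N qN g -> lab F N qN (m1 (ch_map g) w) = lab F M q w.
Proof.
  intro H. unfold lab. f_equal.
  - apply (proj2 (ch_comm _ _ g)).
  - apply functional_extensionality_dep; intro j. apply (proj2 (H j)).
Qed.

Lemma pnd_cmap {J X} (F : diagram J X) M q N qN g m :
  cmap F M q N qN g -> pnd F N qN (m0 (ch_map g) m) = pnd F M q m.
Proof.
  intro H. unfold pnd. f_equal.
  - apply (proj1 (ch_comm _ _ g)).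
  - apply functional_extensionality_dep; intro j. apply (proj1 (H j)).
Qed.

Lemma pnd_tgt {J X} (F : diagram J X) M q w : pnd F M q (tgt w) = tgtP F (lab F M q w).
Proof.
  unfold pnd, tgtP, lab; simpl. f_equal; [apply m_tgt|].
  apply functional_extensionality_dep; intro j. apply m_tgt.
Qed.

Lemma lab_inv {J X} (F : diagram J X) M q w : lab F M q (inv w) = invL F (lab F M q w).
Proof.
  unfold invL, lab; simpl. f_equal; [apply m_inv|].
  apply functional_extensionality_dep; intro j. apply m_inv.
Qed.

Lemma determ {X} (N : cov_obj X) (e e' : harc (cov_dom N)) :
  src e = src e' -> m1 (cov_map N) e = m1 (cov_map N) e' -> tgt e = tgt e'.
Proof.
  intros Hs Hp.
  destruct (proj1 (cov_is_covering _ N (src e)) e e') as [->| ->].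
  - left; reflexivity.
  - left; symmetry; exact Hs.
  - rewrite Hp; left; reflexivity.
  - reflexivity.
  - rewrite tgt_inv. rewrite src_inv in Hs. rewrite Hs. reflexivity.
Qed.

Lemma trace_mono {J X} (F : diagram J X) M q N qN g :
  cmap F M q N qN g -> forall ws m, trace F M q m ws -> trace F N qN (m0 (ch_map g) m) ws.
Proof.
  intros Hg ws; induction ws as [|l ws IH]; intros m H; simpl in *; auto.
  destruct H as [w [Hw1 [Hw2 Hw3]]].
  exists (m1 (ch_map g) w); split; [rewrite <- m_src, Hw1; reflexivity|].
  split; [rewrite (lab_cmap F M q N qN g w Hg); exact Hw2|].
  rewrite <- m_tgt. apply IH; exact Hw3.
Qed.

Lemma cmap_id {J X} (F : diagram J X) M q : cmap F M q M q (hid M).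
Proof. intro j; split; intro; reflexivity. Qed.

Lemma cmap_comp {J X} (F : diagram J X) M q N qN P qP g h :
  cmap F M q N qN g -> cmap F N qN P qP h -> cmap F M q P qP (hcomp h g).
Proof.
  intros Hg Hh j; split; intro; simpl;
  [rewrite (proj1 (Hh j)); apply (proj1 (Hg j))| rewrite (proj2 (Hh j)); apply (proj2 (Hg j))].
Qed.

Lemma What_id {J X} (F : diagram J X) M q m ws : trace F M q m ws -> What F M q m ws.
Proof. intro H. exists M, q, (hid M). split; [apply cmap_id| exact H]. Qed.

Lemma What_step {J X} (F : diagram J X) M q w :
  deriv F (lab F M q w) (What F M q (src w)) = What F M q (tgt w).
Proof.
  apply functional_extensionality; intro ws; apply propositional_extensionality.
  unfold deriv; split.
  - intros (N & qN & g & Hg & e & He1 & He2 & He3).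
    exists N, qN, g; split; [exact Hg|].
    assert (tgt e = m0 (ch_map g) (tgt w)) as <-; [|exact He3].
    rewrite m_tgt. apply determ.
    + rewrite He1, m_src; reflexivity.
    + apply (f_equal fst) in He2. rewrite <- (lab_cmap F M q N qN g w Hg) in He2.
      exact He2.
  - intros (N & qN & g & Hg & H).
    exists N, qN, g; split; [exact Hg|].
    exists (m1 (ch_map g) w); split; [rewrite m_src; reflexivity|].
    split; [apply lab_cmap; exact Hg|]. rewrite <- m_tgt. exact H.
Qed.

Lemma pushout_cone {J X} (F : diagram J X) M q N1 q1 N2 q2 g1 g2 :
  cmap F M q N1 q1 g1 -> cmap F M q N2 q2 g2 ->
  exists (P : cov_obj X) (qP : forall j, cov_hom P (dob F j)) k1 k2,
    cmap F N1 q1 P qP k1 /\ cmap F N2 q2 P qP k2 /\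
    forall m, m0 (ch_map k1) (m0 (ch_map g1) m) = m0 (ch_map k2) (m0 (ch_map g2) m).
Proof.
  intros H1 H2.
  set (D := poD g1 g2).
  set (psi := fun j (i : option bool) =>
        match i return cov_hom (poG M N1 N2 i) (dob F j) with
        | None => q j | Some true => q1 j | Some false => q2 j end).
  assert (Hpsi : forall j k, hcomp_eq (psi j (gt D k)) (gphi D k) (psi j (gs D k))).
  { intros j [|]; simpl; [apply H1| apply H2]. }
  exists (Qobj D), (fun j => qind D (dob F j) (psi j) (Hpsi j)),
    (qincl D (Some true)), (qincl D (Some false)).
  split; [|split].
  - intro j. exact (qind_fac D (dob F j) (psi j) (Hpsi j) (Some true)).
  - intro j. exact (qind_fac D (dob F j) (psi j) (Hpsi j) (Some false)).
  - intro m. apply pushout_basic.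
Qed.

Lemma What_cmap {J X} (F : diagram J X) M q N qN g m :
  cmap F M q N qN g -> What F M q m = What F N qN (m0 (ch_map g) m).
Proof.
  intro Hg. apply functional_extensionality; intro ws; apply propositional_extensionality; split.
  - intros (N' & qN' & g' & Hg' & H).
    destruct (pushout_cone F M q N qN N' qN' g g' Hg Hg') as (P & qP & k1 & k2 & Hk1 & Hk2 & E).
    exists P, qP, k1; split; [exact Hk1|].
    rewrite E. apply (trace_mono F N' qN' P qP k2 Hk2). exact H.
  - intros (P & qP & h & Hh & H).
    exists P, qP, (hcomp h g); split; [apply (cmap_comp F M q N qN P qP); assumption| exact H].
Qed.

Definition LNval {J X} (F : diagram J X) := (PN F * (list (Lab F) -> Prop))%type.

Definition realN {J X} (F : diagram J X) (b : LNval F) : Prop :=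
  exists (M : cov_obj X) (q : forall j, cov_hom M (dob F j)), is_cone F M q /\
    exists m, b = (pnd F M q m, What F M q m).
Definition realH {J X} (F : diagram J X) (g : LNval F * Lab F) : Prop :=
  exists (M : cov_obj X) (q : forall j, cov_hom M (dob F j)), is_cone F M q /\
    exists w, g = ((pnd F M q (src w), What F M q (src w)), lab F M q w).

Definition LN {J X} (F : diagram J X) := {b : LNval F | realN F b}.
Definition LH {J X} (F : diagram J X) := {g : LNval F * Lab F | realH F g}.

Definition Ltgtval {J X} (F : diagram J X) (g : LNval F * Lab F) : LNval F :=
  (tgtP F (snd g), deriv F (snd g) (snd (fst g))).
Definition Linvval {J X} (F : diagram J X) (g : LNval F * Lab F) : LNval F * Lab F :=
  (Ltgtval F g, invL F (snd g)).

Lemma Ltgtval_real {J X} (F : diagram J X) M q w :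
  Ltgtval F ((pnd F M q (src w), What F M q (src w)), lab F M q w) = (pnd F M q (tgt w), What F M q (tgt w)).
Proof. unfold Ltgtval; simpl. rewrite pnd_tgt, What_step. reflexivity. Qed.

Lemma Linvval_real {J X} (F : diagram J X) M q w :
  Linvval F ((pnd F M q (src w), What F M q (src w)), lab F M q w) =
  ((pnd F M q (src (inv w)), What F M q (src (inv w))), lab F M q (inv w)).
Proof. unfold Linvval. rewrite Ltgtval_real, src_inv, lab_inv. reflexivity. Qed.

Lemma realH_src {J X} (F : diagram J X) g : realH F g -> realN F (fst g).
Proof. intros (M & q & Hc & w & ->). exists M, q; split; [exact Hc|]. exists (src w); reflexivity. Qed.
Lemma realH_tgt {J X} (F : diagram J X) g : realH F g -> realN F (Ltgtval F g).
Proof.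
  intros (M & q & Hc & w & ->). exists M, q; split; [exact Hc|]. exists (tgt w).
  apply Ltgtval_real.
Qed.
Lemma realH_inv {J X} (F : diagram J X) g : realH F g -> realH F (Linvval F g).
Proof.
  intros (M & q & Hc & w & ->). exists M, q; split; [exact Hc|]. exists (inv w).
  apply Linvval_real.
Qed.

Definition Lsrc {J X} {F : diagram J X} (g : LH F) : LN F :=
  exist _ (fst (proj1_sig g)) (realH_src F _ (proj2_sig g)).
Definition Ltgt {J X} {F : diagram J X} (g : LH F) : LN F :=
  exist _ (Ltgtval F (proj1_sig g)) (realH_tgt F _ (proj2_sig g)).
Definition Linv {J X} {F : diagram J X} (g : LH F) : LH F :=
  exist _ (Linvval F (proj1_sig g)) (realH_inv F _ (proj2_sig g)).

Lemma Linv_invol {J X} {F : diagram J X} (g : LH F) : Linv (Linv g) = g.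
Proof.
  apply sig_ext. destruct g as [g (M & q & Hc & w & ->)]. simpl.
  rewrite !Linvval_real, inv_invol. reflexivity.
Qed.

Lemma Lsrc_inv {J X} {F : diagram J X} (g : LH F) : Lsrc (Linv g) = Ltgt g.
Proof. apply sig_ext. reflexivity. Qed.

Definition Lgraph {J X} (F : diagram J X) : graph :=
  Graph (LN F) (LH F) Lsrc Ltgt Linv Linv_invol Lsrc_inv.

Definition Lmap {J X} (F : diagram J X) : gmor (Lgraph F) X.
Proof.
  refine (GMor (Lgraph F) X (fun b => fst (fst (proj1_sig b))) (fun g => fst (snd (proj1_sig g))) _ _ _);
  intros [g (M & q & Hc & w & ->)]; simpl; try reflexivity.
  apply m_src.
Defined.

Definition Lproj_g {J X} (F : diagram J X) (j : ob J) : gmor (Lgraph F) (cov_dom (dob F j)).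
Proof.
  refine (GMor (Lgraph F) _ (fun b => snd (fst (proj1_sig b)) j) (fun g => snd (snd (proj1_sig g)) j) _ _ _);
  intros [g (M & q & Hc & w & ->)]; simpl; try reflexivity.
  apply m_src.
Defined.

Lemma L_inj_src {J X} (F : diagram J X) (g1 g2 : LH F) :
  Lsrc g1 = Lsrc g2 -> same_arc (m1 (Lmap F) g1) (m1 (Lmap F) g2) -> @same_arc (Lgraph F) g1 g2.
Proof.
  destruct g1 as [g1 (M1 & q1 & Hc1 & w1 & ->)], g2 as [g2 (M2 & q2 & Hc2 & w2 & ->)].
  intros E Hs. apply (f_equal (@proj1_sig _ _)) in E. simpl in E, Hs.
  assert (HW : What F M1 q1 (src w1) (lab F M2 q2 w2 :: nil)).
  { apply (f_equal snd) in E. simpl in E. rewrite E. apply What_id. simpl.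
    exists w2; auto. }
  destruct HW as (N & qN & g & Hg & e & He1 & He2 & _).
  assert (Hse : same_arc (m1 (ch_map g) w1) e).
  { apply (proj1 (cov_is_covering _ N (m0 (ch_map g) (src w1)))).
    - left; symmetry; apply m_src.
    - left; exact He1.
    - rewrite (proj2 (ch_comm _ _ g)).
      apply (f_equal fst) in He2. simpl in He2. rewrite He2. exact Hs. }
  destruct Hse as [Hse|Hse].
  - left. apply sig_ext; simpl. rewrite E. f_equal.
    rewrite <- He2, <- Hse. symmetry; apply lab_cmap; exact Hg.
  - right. apply sig_ext; simpl. unfold Linvval, Ltgtval; simpl.
    assert (Et : tgt e = m0 (ch_map g) (src w1)).
    { rewrite <- src_inv, <- Hse, <- m_src. reflexivity. }
    apply (f_equal snd) in E; simpl in E. rewrite <- E. rewrite <- He2.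
    assert (A1 : tgtP F (lab F N qN e) = pnd F M1 q1 (src w1)).
    { rewrite <- pnd_tgt, Et. apply pnd_cmap; exact Hg. }
    assert (A2 : deriv F (lab F N qN e) (What F M1 q1 (src w1)) = What F M1 q1 (src w1)).
    { rewrite (What_cmap F M1 q1 N qN g (src w1) Hg), <- He1, What_step, Et, He1. reflexivity. }
    assert (A3 : invL F (lab F N qN e) = lab F M1 q1 w1).
    { rewrite <- lab_inv, <- Hse. apply lab_cmap; exact Hg. }
    rewrite A1, A2, A3. reflexivity.
Qed.

Lemma L_covering {J X} (F : diagram J X) : is_covering (Lmap F).
Proof.
  intro b. split.
  - intros g1 g2 H1 H2 Hs.
    destruct (at_node_norm b g1 H1) as [g1' [E1 S1]].
    destruct (at_node_norm b g2 H2) as [g2' [E2 S2]].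
    apply (same_arc_trans _ g1'); [exact S1|].
    apply (same_arc_trans _ g2'); [|apply same_arc_sym; exact S2].
    apply L_inj_src.
    + simpl in E1, E2. rewrite E1, E2; reflexivity.
    + apply (same_arc_trans _ (m1 (Lmap F) g1)); [apply same_arc_sym, m_same; exact S1|].
      apply (same_arc_trans _ (m1 (Lmap F) g2)); [exact Hs| apply m_same; exact S2].
  - intros v Hv. destruct b as [b (M & q & Hc & m & ->)]. simpl in Hv.
    destruct (proj2 (cov_is_covering _ M m) v Hv) as [u [Hu Hs]].
    destruct (at_node_norm m u Hu) as [u' [Eu Su]].
    assert (R : realH F ((pnd F M q (src u'), What F M q (src u')), lab F M q u')).
    { exists M, q; split; [exact Hc|]. exists u'; reflexivity. }
    exists (exist _ _ R); split.
    + left. apply sig_ext; simpl. rewrite Eu. reflexivity.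
    + simpl. apply (same_arc_trans _ (m1 (cov_map M) u)); [|exact Hs].
      apply same_arc_sym, m_same; exact Su.
Qed.

Definition Lobj {J X} (F : diagram J X) : cov_obj X := CovObj X (Lgraph F) (Lmap F) (L_covering F).

Lemma Lproj_comm {J X} (F : diagram J X) j : comp_eq (cov_map (dob F j)) (Lproj_g F j) (Lmap F).
Proof.
  split; [intros [b (M & q & Hc & m & ->)]| intros [g (M & q & Hc & w & ->)]]; simpl;
  [apply (proj1 (ch_comm _ _ (q j)))| apply (proj2 (ch_comm _ _ (q j)))].
Qed.

Definition Lproj {J X} (F : diagram J X) (j : ob J) : cov_hom (Lobj F) (dob F j) :=
  CovHom X (Lobj F) (dob F j) (Lproj_g F j)
    (cov_cancel _ _ _ (Lproj_comm F j) (L_covering F) (cov_is_covering _ _))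
    (Lproj_comm F j).

Lemma L_cone {J X} (F : diagram J X) : is_cone F (Lobj F) (Lproj F).
Proof.
  intros i j u. split; [intros [b (M & q & Hc & m & ->)]| intros [g (M & q & Hc & w & ->)]]; simpl;
  [apply (proj1 (Hc i j u))| apply (proj2 (Hc i j u))].
Qed.

Definition Lcan_g {J X} (F : diagram J X) (M : cov_obj X) (q : forall j, cov_hom M (dob F j))
  (Hc : is_cone F M q) : gmor (cov_dom M) (Lgraph F).
Proof.
  refine (GMor (cov_dom M) (Lgraph F)
     (fun m => exist _ (pnd F M q m, What F M q m)
                 (ex_intro _ M (ex_intro _ q (conj Hc (ex_intro _ m eq_refl)))))
     (fun w => exist _ ((pnd F M q (src w), What F M q (src w)), lab F M q w)
                 (ex_intro _ M (ex_intro _ q (conj Hc (ex_intro _ w eq_refl)))))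
     _ _ _); intro w; apply sig_ext; simpl.
  - reflexivity.
  - symmetry; apply Ltgtval_real.
  - symmetry; apply Linvval_real.
Defined.

Lemma Lcan_comm {J X} (F : diagram J X) M q Hc : comp_eq (Lmap F) (Lcan_g F M q Hc) (cov_map M).
Proof. split; intro; reflexivity. Qed.

Definition Lcan {J X} (F : diagram J X) M q Hc : cov_hom M (Lobj F) :=
  CovHom X M (Lobj F) (Lcan_g F M q Hc)
    (cov_cancel _ _ _ (Lcan_comm F M q Hc) (cov_is_covering _ _) (L_covering F))
    (Lcan_comm F M q Hc).

Lemma Lcan_cmap {J X} (F : diagram J X) M q Hc : cmap F M q (Lobj F) (Lproj F) (Lcan F M q Hc).
Proof. intro j; split; intro; reflexivity. Qed.

Lemma pair_ext {A B : Type} (p : A * B) a b : fst p = a -> snd p = b -> p = (a, b).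
Proof. destruct p; simpl; intros -> ->; reflexivity. Qed.

Lemma L_uniq {J X} (F : diagram J X) M q Hc (h : cov_hom M (Lobj F)) :
  cmap F M q (Lobj F) (Lproj F) h -> gmor_eq (ch_map h) (ch_map (Lcan F M q Hc)).
Proof.
  intro Hh.
  assert (Hn : forall m, m0 (ch_map h) m = m0 (ch_map (Lcan F M q Hc)) m).
  { intro m. apply sig_ext. simpl.
    rewrite (What_cmap F M q (Lobj F) (Lproj F) h m Hh).
    destruct (proj2_sig (m0 (ch_map h) m)) as (M1 & q1 & Hc1 & m1' & Eb).
    assert (Eq1 : m0 (ch_map h) m = m0 (ch_map (Lcan F M1 q1 Hc1)) m1').
    { apply sig_ext; simpl. exact Eb. }
    assert (Ep : fst (proj1_sig (m0 (ch_map h) m)) = pnd F M q m).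
    { unfold pnd. apply pair_ext.
      - exact (proj1 (ch_comm _ _ h) m).
      - apply functional_extensionality_dep; intro j. exact (proj1 (Hh j) m). }
    apply pair_ext; [exact Ep|].
    rewrite Eq1, <- (What_cmap F M1 q1 (Lobj F) (Lproj F) _ m1' (Lcan_cmap F M1 q1 Hc1)).
    exact (f_equal snd Eb). }
  split; [exact Hn|].
  intro w. apply sig_ext. simpl.
  apply pair_ext.
  - pose proof (f_equal (@proj1_sig _ _) (Hn (src w))) as C.
    rewrite m_src in C. simpl in C. exact C.
  - unfold lab. apply pair_ext.
    + exact (proj2 (ch_comm _ _ h) w).
    + apply functional_extensionality_dep; intro j. exact (proj2 (Hh j) w).
Qed.

Theorem limits (X : graph) : has_all_small_limits X.
Proof.
  intros J F. exists (Lobj F), (Lproj F). split; [apply L_cone|].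
  intros M q Hc. split.
  - exists (Lcan F M q Hc). apply Lcan_cmap.
  - intros h h' H H'.
    destruct (L_uniq F M q Hc h H) as [A0 A1].
    destruct (L_uniq F M q Hc h' H') as [B0 B1].
    split; intro; [rewrite A0, B0| rewrite A1, B1]; reflexivity.
Qed.

Theorem proposition5p2 :
  forall X : graph, has_all_small_limits X /\ has_all_small_colimits X.
Proof. intro X; split; [apply limits| apply colimits]. Qed.
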